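(* Let $\mathbf u_0,\mathbf u_1\in\Lambda_q$ with $\mathbf u_0\wedge\mathbf u_1=1$. Start with the list $L_0=(\mathbf u_0,\mathbf u_1)$, and for $n\ge0$ obtain $L_{n+1}$ from $L_n$ by replacing every pair $(\mathbf v,\mathbf w)$ of consecutive entries of $L_n$ by the $q$ vectors $x_j^q\mathbf v+y_j^q\mathbf w$, $j=0,1,\dots,q-1$ (the first and last being $\mathbf v$ and $\mathbf w$ themselves; shared endpoints are listed once). Then for every $n\ge0$, every entry of $L_n$ lies in $\Lambda_q$ and in the sector $\{\alpha\mathbf u_0+\beta\mathbf u_1:\alpha,\beta\ge0\}$, and every pair $(\mathbf v,\mathbf w)$ of consecutive entries of $L_n$ satisfies $\mathbf v\wedge\mathbf w=1$. Moreover, every element of $\Lambda_q$ lying in the sector $\{\alpha\mathbf u_0+\beta\mathbf u_1:\alpha,\beta\ge0\}$ appears in $L_n$ for some $n$.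
   Context: Fix an integer $q\ge3$, let $\lambda_q=2\cos(\pi/q)$, and let $G_q\subset \mathrm{SL}(2,\mathbb R)$ be the Hecke triangle group generated by $S=\begin{pmatrix}0&-1\\1&0\end{pmatrix}$ and $T_q=\begin{pmatrix}1&\lambda_q\\0&1\end{pmatrix}$, acting linearly on $\mathbb R^2$. Set $\Lambda_q=G_q(1,0)^T$. Let $U_q=T_qS=\begin{pmatrix}\lambda_q&-1\\1&0\end{pmatrix}$ and $(x_j^q,y_j^q)^T=U_q^j(1,0)^T$ for $j=0,\dots,q-1$. The wedge product is $(x_0,y_0)^T\wedge(x_1,y_1)^T=x_0y_1-x_1y_0$. The vectors appearing in some $L_n$ other than $\mathbf u_0,\mathbf u_1$ are called the ($G_q$-Stern–Brocot) grandchildren of $\mathbf u_0,\mathbf u_1$. *)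

(* Defs.v *)
From Stdlib Require Import Reals List.
Import ListNotations.
Open Scope R_scope.

Record mat2 := Mat2 { m11 : R; m12 : R; m21 : R; m22 : R }.
Definition vec := (R * R)%type.

Definition mmul (A B : mat2) : mat2 :=
  Mat2 (m11 A * m11 B + m12 A * m21 B) (m11 A * m12 B + m12 A * m22 B)
       (m21 A * m11 B + m22 A * m21 B) (m21 A * m12 B + m22 A * m22 B).

Definition mvec (A : mat2) (v : vec) : vec :=
  (m11 A * fst v + m12 A * snd v, m21 A * fst v + m22 A * snd v).

Definition Id2 : mat2 := Mat2 1 0 0 1.

Definition lam (q : nat) : R := 2 * cos (PI / INR q).

Definition Smat : mat2 := Mat2 0 (-1) 1 0.
Definition Sinv : mat2 := Mat2 0 1 (-1) 0.
Definition Tmat (q : nat) : mat2 := Mat2 1 (lam q) 0 1.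
Definition Tinv (q : nat) : mat2 := Mat2 1 (- lam q) 0 1.

(* The Hecke group G_q: the subgroup of SL(2,R) generated by S and T_q,
   i.e. all finite words in S, S^-1, T_q, T_q^-1. *)
Inductive inG (q : nat) : mat2 -> Prop :=
| inG_id : inG q Id2
| inG_S : forall g, inG q g -> inG q (mmul Smat g)
| inG_Sinv : forall g, inG q g -> inG q (mmul Sinv g)
| inG_T : forall g, inG q g -> inG q (mmul (Tmat q) g)
| inG_Tinv : forall g, inG q g -> inG q (mmul (Tinv q) g).

Definition inLambda (q : nat) (v : vec) : Prop :=
  exists g, inG q g /\ v = mvec g (1, 0).

Definition wedge (v w : vec) : R := fst v * snd w - fst w * snd v.

Definition Umat (q : nat) : mat2 := mmul (Tmat q) Smat.
Definition xy (q j : nat) : vec := Nat.iter j (mvec (Umat q)) (1, 0).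

Definition comb (q j : nat) (v w : vec) : vec :=
  (fst (xy q j) * fst v + snd (xy q j) * fst w,
   fst (xy q j) * snd v + snd (xy q j) * snd w).

(* One refinement step: the list v_0, v_1, ..., v_m becomes
   v_0, then for each consecutive pair (v,w) the vectors x_j v + y_j w for
   j = 1, ..., q-1 (j = 0 gives v, already listed). *)
Fixpoint refine_aux (q : nat) (v : vec) (rest : list vec) : list vec :=
  match rest with
  | [] => []
  | w :: rest' => map (fun j => comb q j v w) (seq 1 (q - 1)) ++ refine_aux q w rest'
  end.

Definition refine (q : nat) (l : list vec) : list vec :=
  match l with
  | [] => []
  | v :: rest => v :: refine_aux q v rest
  end.

Definition Ln (q : nat) (u0 u1 : vec) (n : nat) : list vec :=
  Nat.iter n (refine q) [u0; u1].

Definition in_sector (u0 u1 v : vec) : Prop :=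
  exists a b : R, 0 <= a /\ 0 <= b /\
    v = (a * fst u0 + b * fst u1, a * snd u0 + b * snd u1).

(* Main.v *)
Require Import Defs.
From Stdlib Require Import Reals List.
Import ListNotations.
Open Scope R_scope.
From Stdlib Require Import Lra Lia Psatz ZArith.


Ltac mq := unfold mmul, Smat, Sinv, Tmat, Tinv, Id2; simpl; f_equal; ring.

Lemma mmul_assoc A B C : mmul A (mmul B C) = mmul (mmul A B) C.
Proof. destruct A, B, C; mq. Qed.
Lemma mmul_Id_l A : mmul Id2 A = A.
Proof. destruct A; mq. Qed.
Lemma mmul_Id_r A : mmul A Id2 = A.
Proof. destruct A; mq. Qed.

Lemma inG_mul q A B : inG q A -> inG q B -> inG q (mmul A B).
Proof.
  intros HA; revert B; induction HA; intros B HB.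
  - rewrite mmul_Id_l; auto.
  - rewrite <- mmul_assoc; constructor; auto.
  - rewrite <- mmul_assoc; constructor; auto.
  - rewrite <- mmul_assoc; constructor; auto.
  - rewrite <- mmul_assoc; constructor; auto.
Qed.

Lemma inG_S q : inG q Smat.
Proof. rewrite <- (mmul_Id_r Smat); constructor; constructor. Qed.
Lemma inG_Si q : inG q Sinv.
Proof. rewrite <- (mmul_Id_r Sinv); constructor; constructor. Qed.
Lemma inG_T q : inG q (Tmat q).
Proof. rewrite <- (mmul_Id_r (Tmat q)); constructor; constructor. Qed.
Lemma inG_Ti q : inG q (Tinv q).
Proof. rewrite <- (mmul_Id_r (Tinv q)); constructor; constructor. Qed.

Definition det (M : mat2) := m11 M * m22 M - m12 M * m21 M.
Lemma det_mul A B : det (mmul A B) = det A * det B.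
Proof. destruct A, B; unfold det, mmul; simpl; ring. Qed.
Lemma inG_det q g : inG q g -> det g = 1.
Proof.
  induction 1; try (rewrite det_mul, IHinG; unfold det; simpl; ring).
  unfold det, Id2; simpl; ring.
Qed.

Definition inv2 (M : mat2) := Mat2 (m22 M) (- m12 M) (- m21 M) (m11 M).
Lemma inv2_mul A B : inv2 (mmul A B) = mmul (inv2 B) (inv2 A).
Proof. destruct A, B; unfold inv2; mq. Qed.
Lemma inG_inv q g : inG q g -> inG q (inv2 g).
Proof.
  induction 1; try (rewrite inv2_mul; apply inG_mul; [assumption|]).
  - replace (inv2 Id2) with Id2 by (unfold inv2; mq). constructor.
  - replace (inv2 Smat) with Sinv by (unfold inv2; mq). apply inG_Si.
  - replace (inv2 Sinv) with Smat by (unfold inv2; mq). apply inG_S.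
  - replace (inv2 (Tmat q)) with (Tinv q) by (unfold inv2; mq). apply inG_Ti.
  - replace (inv2 (Tinv q)) with (Tmat q) by (unfold inv2; mq). apply inG_T.
Qed.

Lemma mvec_mul A B x : mvec (mmul A B) x = mvec A (mvec B x).
Proof. destruct A, B, x; unfold mvec, mmul; simpl; f_equal; ring. Qed.

Lemma inv2_r M : det M = 1 -> mmul M (inv2 M) = Id2.
Proof. destruct M; unfold det, inv2; simpl; intro H; unfold mmul, Id2; simpl; f_equal; lra. Qed.

Lemma lam_transform q h z : inG q h -> inLambda q z -> inLambda q (mvec h z).
Proof.
  intros Hh [g [Hg ->]]. exists (mmul h g); split.
  - apply inG_mul; auto.
  - rewrite mvec_mul; reflexivity.
Qed.

Lemma lam_entries q v : inLambda q v -> exists g, inG q g /\ v = (m11 g, m21 g).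
Proof.
  intros [g [Hg ->]]. exists g; split; auto. unfold mvec; simpl; f_equal; ring.
Qed.

Lemma xy_S q j : xy q (S j) = (lam q * fst (xy q j) - snd (xy q j), fst (xy q j)).
Proof.
  change (xy q (S j)) with (mvec (Umat q) (xy q j)).
  destruct (xy q j) as [a b]; unfold mvec, Umat, mmul, Tmat, Smat; simpl; f_equal; ring.
Qed.
Lemma xy_0 q : xy q 0 = (1, 0).
Proof. reflexivity. Qed.

Lemma xy_sin q j : fst (xy q j) * sin (PI / INR q) = sin (INR (S j) * (PI / INR q)) /\
   snd (xy q j) * sin (PI / INR q) = sin (INR j * (PI / INR q)).
Proof.
  set (t := PI / INR q).
  induction j as [|j [H1 H2]].
  - rewrite xy_0; simpl fst; simpl snd. simpl INR. split.
    + rewrite Rmult_1_l, Rmult_1_l; reflexivity.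
    + rewrite Rmult_0_l, Rmult_0_l, sin_0; reflexivity.
  - rewrite xy_S; simpl fst; simpl snd. split; [|exact H1].
    replace (INR (S (S j)) * t) with (INR (S j) * t + t) by (rewrite (S_INR (S j)); ring).
    replace (INR j * t) with (INR (S j) * t - t) in H2 by (rewrite (S_INR j); ring).
    rewrite sin_plus. rewrite sin_minus in H2. unfold lam; fold t.
    replace ((2 * cos t * fst (xy q j) - snd (xy q j)) * sin t) with
      (2 * cos t * (fst (xy q j) * sin t) - snd (xy q j) * sin t) by ring.
    rewrite H1, H2; ring.
Qed.

Section Trig.
Variable q : nat.
Hypothesis Hq : (3 <= q)%nat.

Let t := PI / INR q.

Lemma INRq : 3 <= INR q.
Proof. replace 3 with (INR 3) by (simpl; ring). apply le_INR; exact Hq. Qed.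

Lemma t_pos : 0 < t.
Proof. unfold t. pose proof INRq. pose proof PI_RGT_0. apply Rdiv_lt_0_compat; lra. Qed.
Lemma t_q : INR q * t = PI.
Proof. unfold t. pose proof INRq. field. lra. Qed.
Lemma t_small : t <= PI / 3.
Proof.
  unfold t. pose proof INRq. pose proof PI_RGT_0.
  apply Rmult_le_compat_l; [lra|]. apply Rinv_le_contravar; lra.
Qed.
Lemma sint_pos : 0 < sin t.
Proof. pose proof t_pos; pose proof t_small; pose proof PI_RGT_0. apply sin_gt_0; lra. Qed.

Lemma lam_pos : 0 < lam q.
Proof. unfold lam. fold t. pose proof t_pos; pose proof t_small; pose proof PI_RGT_0.
  assert (0 < cos t) by (apply cos_gt_0; lra). lra. Qed.
Lemma lam_lt2 : lam q < 2.
Proof. unfold lam. fold t. pose proof t_pos; pose proof t_small; pose proof PI_RGT_0.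
  assert (cos t < cos 0) by (apply cos_decreasing_1; lra). rewrite cos_0 in H2. lra. Qed.

Lemma xs j : fst (xy q j) * sin t = sin (INR (S j) * t).
Proof. apply xy_sin. Qed.

Lemma sin_ge_t u : t <= u -> u <= PI - t -> sin t <= sin u.
Proof.
  intros H1 H2. pose proof t_pos; pose proof t_small; pose proof PI_RGT_0.
  destruct (Rle_dec u (PI/2)).
  - apply sin_incr_1; lra.
  - rewrite <- (sin_PI_x u). apply sin_incr_1; lra.
Qed.

Lemma x_ge0 j : (j <= q - 1)%nat -> 0 <= fst (xy q j).
Proof.
  intro Hj. pose proof (xs j). pose proof sint_pos. pose proof t_pos.
  assert (INR (S j) <= INR q) by (apply le_INR; lia).
  assert (0 <= INR (S j)) by apply pos_INR.
  assert (0 <= sin (INR (S j) * t)).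
  { apply sin_ge_0. nra. rewrite <- t_q. nra. }
  nra.
Qed.

Lemma x_ge1 j : (j <= q - 2)%nat -> 1 <= fst (xy q j).
Proof.
  intro Hj. pose proof (xs j). pose proof sint_pos. pose proof t_pos.
  assert (INR (S j) + 1 <= INR q) by (rewrite <- S_INR; apply le_INR; lia).
  assert (1 <= INR (S j)) by (rewrite S_INR; pose proof (pos_INR j); lra).
  assert (sin t <= sin (INR (S j) * t)).
  { apply sin_ge_t. nra. pose proof t_q. nra. }
  nra.
Qed.

Lemma x_last : fst (xy q (q - 1)) = 0.
Proof.
  pose proof (xs (q-1)). replace (S (q-1)) with q in H by lia.
  rewrite t_q, sin_PI in H. pose proof sint_pos. nra.
Qed.

Lemma x_last2 : fst (xy q (q - 2)) = 1.
Proof.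
  pose proof (xs (q-2)). replace (S (q-2)) with ((q - 1))%nat in H by lia.
  rewrite minus_INR in H by lia.
  replace ((INR q - INR 1) * t) with (PI - t) in H by (rewrite <- t_q; simpl; ring).
  rewrite sin_PI_x in H. pose proof sint_pos. nra.
Qed.

Lemma y_S j : snd (xy q (S j)) = fst (xy q j).
Proof. rewrite xy_S; reflexivity. Qed.
Lemma x_S j : fst (xy q (S j)) = lam q * fst (xy q j) - snd (xy q j).
Proof. rewrite xy_S; reflexivity. Qed.

Lemma y_ge0 j : (j <= q - 1)%nat -> 0 <= snd (xy q j).
Proof. intros; destruct j. rewrite xy_0; simpl; lra. rewrite y_S; apply x_ge0; lia. Qed.

Lemma y_ge1 j : (1 <= j)%nat -> (j <= q - 1)%nat -> 1 <= snd (xy q j).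
Proof. intros; destruct j. lia. rewrite y_S; apply x_ge1; lia. Qed.

Lemma y_last : snd (xy q (q - 1)) = 1.
Proof. replace (q - 1)%nat with (S (q - 2)) by lia. rewrite y_S. apply x_last2. Qed.
Lemma y_last2 : snd (xy q (q - 2)) = lam q.
Proof.
  pose proof x_last. replace (q - 1)%nat with (S (q - 2)) in H by lia.
  rewrite x_S, x_last2 in H. lra.
Qed.

End Trig.

Definition Z01 (x : R) := x = 0 \/ 1 <= x.
Definition Za (x : R) := Z01 x \/ Z01 (- x).

Lemma Z01_mul a b : Z01 a -> Z01 b -> Z01 (a * b).
Proof. unfold Z01; intros [->|Ha] [->|Hb]; [left;ring|left;ring|left;ring|right;nra]. Qed.
Lemma Z01_add a b : Z01 a -> Z01 b -> Z01 (a + b).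
Proof. unfold Z01; intros [->|Ha] [->|Hb]; [left;ring|right;lra|right;lra|right;lra]. Qed.
Lemma Z01_ge0 a : Z01 a -> 0 <= a.
Proof. unfold Z01; lra. Qed.
Lemma Za_opp a : Za a -> Za (- a).
Proof. unfold Za; rewrite Ropp_involutive; tauto. Qed.
Lemma Za_pos a : Za a -> 0 <= a -> Z01 a.
Proof. unfold Za, Z01; intros [H|H] H0; lra. Qed.

Definition Nm q j := Mat2 (fst (xy q j)) (fst (xy q (S j))) (snd (xy q j)) (snd (xy q (S j))).

Inductive Tr (q : nat) : mat2 -> Prop :=
| Tr_I : Tr q Id2
| Tr_N : forall P j, Tr q P -> (j <= q - 2)%nat -> Tr q (mmul P (Nm q j)).

Fixpoint Spow (n : nat) : mat2 := match n with 0 => Id2 | S n => mmul Smat (Spow n) end.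
Definition Sk (b : bool) := if b then Smat else Id2.
Definition W q g := exists a M b, Tr q M /\ g = mmul (mmul (Spow a) M) (Sk b).

Lemma Spow_form a : exists c d, Spow a = Mat2 c d (- d) c.
Proof.
  induction a as [|a [c [d IH]]].
  - exists 1, 0. simpl; unfold Id2. f_equal; ring.
  - exists (d), (- c). simpl. rewrite IH. mq.
Qed.

Section W.
Variable q : nat.
Hypothesis Hq : (3 <= q)%nat.

Lemma Nm0 : Nm q 0 = Tmat q.
Proof. unfold Nm. rewrite xy_S, xy_0. simpl. unfold Tmat. f_equal; ring. Qed.

Lemma NST j : mmul (mmul (Nm q j) Smat) (Tmat q) = Nm q (S j).
Proof. unfold Nm. rewrite !xy_S. simpl. unfold Tmat, Smat, mmul; simpl. f_equal; ring. Qed.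

Lemma Nlast : Nm q (q - 2) = Mat2 1 0 (lam q) 1.
Proof.
  unfold Nm. replace (S (q - 2)) with (q - 1)%nat by lia.
  rewrite x_last, x_last2, y_last, y_last2 by exact Hq. reflexivity.
Qed.

Lemma NTi j : mmul (Nm q (S j)) (Tinv q) = mmul (Nm q j) Smat.
Proof. unfold Nm. rewrite !xy_S. simpl. unfold Tinv, Smat, mmul; simpl. f_equal; ring. Qed.

Lemma W_S g : W q g -> W q (mmul g Smat).
Proof.
  intros [a [M [b [HM ->]]]]. destruct b; simpl Sk.
  - exists (S (S a)), M, false. split; auto. simpl.
    destruct (Spow_form a) as [c [d ->]]. destruct M; mq.
  - exists a, M, true. split; auto. simpl. rewrite mmul_Id_r. reflexivity.
Qed.

Lemma W_Si g : W q g -> W q (mmul g Sinv).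
Proof.
  intro H. replace (mmul g Sinv) with (mmul (mmul (mmul g Smat) Smat) Smat).
  - do 3 apply W_S; auto.
  - destruct g; mq.
Qed.

Lemma W_T g : W q g -> W q (mmul g (Tmat q)).
Proof.
  intros [a [M [b [HM ->]]]]. destruct b; simpl Sk.
  - destruct HM as [|P j HP Hj].
    + exists (S a), (mmul Id2 (Nm q 0)), false. split. constructor. constructor. lia.
      rewrite Nm0. simpl. destruct (Spow_form a) as [c [d ->]]. mq.
    + destruct (Nat.eq_dec j (q - 2)) as [E|E].
      * exists a, P, true. split; auto. subst j.
        replace (mmul (mmul (mmul (Spow a) (mmul P (Nm q (q - 2)))) Smat) (Tmat q))
          with (mmul (mmul (Spow a) P) (mmul (mmul (Nm q (q - 2)) Smat) (Tmat q)))
          by (destruct (Spow a), P, (Nm q (q-2)); mq).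
        rewrite NST. replace (S (q-2)) with (q - 1)%nat by lia.
        unfold Nm. rewrite x_last, y_last by exact Hq.
        replace (S (q-1)) with (S (S (q - 2))) by lia.
        rewrite xy_S, (xy_S q (q-2)), x_last2, y_last2 by exact Hq. simpl.
        destruct P, (Spow a); mq.
      * exists a, (mmul P (Nm q (S j))), false. split. constructor; auto; lia.
        rewrite <- NST. simpl Sk. destruct P, (Spow a), (Nm q j); mq.
  - exists a, (mmul M (Nm q 0)), false. split. constructor; auto; lia.
    rewrite Nm0. simpl Sk. destruct M, (Spow a); mq.
Qed.

Lemma W_Ti g : W q g -> W q (mmul g (Tinv q)).
Proof.
  intros [a [M [b [HM ->]]]]. destruct b; simpl Sk.
  - exists a, (mmul M (Nm q (q-2))), true. split. constructor; auto; lia.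
    rewrite Nlast. simpl Sk. destruct M, (Spow a); mq.
  - destruct HM as [|P j HP Hj].
    + exists (S (S (S a))), (mmul Id2 (Nm q (q-2))), true. split. constructor. constructor. lia.
      rewrite Nlast. simpl. destruct (Spow_form a) as [c [d ->]]. mq.
    + destruct j as [|j].
      * exists a, P, false. split; auto. rewrite Nm0. simpl Sk. destruct P, (Spow a); mq.
      * exists a, (mmul P (Nm q j)), true. split. constructor; auto; lia.
        simpl Sk.
        replace (mmul (mmul (mmul (Spow a) (mmul P (Nm q (S j)))) Id2) (Tinv q))
          with (mmul (mmul (Spow a) P) (mmul (Nm q (S j)) (Tinv q)))
          by (destruct (Spow a), P, (Nm q (S j)); mq).
        rewrite NTi. destruct P, (Spow a), (Nm q j); mq.
Qed.

Lemma W_mul g : inG q g -> forall w, W q w -> W q (mmul w g).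
Proof.
  induction 1; intros w Hw.
  - rewrite mmul_Id_r; auto.
  - rewrite mmul_assoc. apply IHinG, W_S, Hw.
  - rewrite mmul_assoc. apply IHinG, W_Si, Hw.
  - rewrite mmul_assoc. apply IHinG, W_T, Hw.
  - rewrite mmul_assoc. apply IHinG, W_Ti, Hw.
Qed.

Lemma inG_W g : inG q g -> W q g.
Proof.
  intro H. rewrite <- (mmul_Id_l g). apply W_mul; auto.
  exists 0%nat, Id2, false. split. constructor. simpl. mq.
Qed.

Definition EM (M : mat2) := Z01 (m11 M) /\ Z01 (m12 M) /\ Z01 (m21 M) /\ Z01 (m22 M).
Definition EA (M : mat2) := Za (m11 M) /\ Za (m12 M) /\ Za (m21 M) /\ Za (m22 M).

Lemma xZ j : (j <= q - 1)%nat -> Z01 (fst (xy q j)).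
Proof.
  intro. destruct (Nat.eq_dec j (q-1)). subst; rewrite x_last; [left; auto|auto].
  right; apply x_ge1; auto; lia.
Qed.
Lemma yZ j : (j <= q - 1)%nat -> Z01 (snd (xy q j)).
Proof.
  intro. destruct j. rewrite xy_0; left; reflexivity.
  right; apply y_ge1; auto; lia.
Qed.

Lemma Tr_EM M : Tr q M -> EM M.
Proof.
  induction 1.
  - unfold EM, Id2, Z01; simpl; lra.
  - destruct IHTr as [A1 [A2 [A3 A4]]]. destruct P; simpl in *.
    pose proof (xZ j ltac:(lia)); pose proof (xZ (S j) ltac:(lia));
    pose proof (yZ j ltac:(lia)); pose proof (yZ (S j) ltac:(lia)).
    unfold EM, mmul, Nm; simpl.
    repeat split; apply Z01_add; apply Z01_mul; auto.
Qed.

Lemma EA_S g : EA g -> EA (mmul Smat g).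
Proof.
  replace (mmul Smat g) with (Mat2 (- m21 g) (- m22 g) (m11 g) (m12 g)) by (destruct g; mq).
  unfold EA; simpl; intros [? [? [? ?]]]; repeat split; auto; apply Za_opp; auto.
Qed.
Lemma EA_Sr g : EA g -> EA (mmul g Smat).
Proof.
  replace (mmul g Smat) with (Mat2 (m12 g) (- m11 g) (m22 g) (- m21 g)) by (destruct g; mq).
  unfold EA; simpl; intros [? [? [? ?]]]; repeat split; auto; apply Za_opp; auto.
Qed.

Lemma inG_EA g : inG q g -> EA g.
Proof.
  intro H. destruct (inG_W g H) as [a [M [b [HM ->]]]].
  assert (EA (mmul (Spow a) M)).
  { clear H. induction a.
    - change (Spow 0) with Id2; rewrite mmul_Id_l. destruct (Tr_EM M HM) as [? [? [? ?]]]. unfold EA, Za; tauto.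
    - change (Spow (S a)) with (mmul Smat (Spow a)). rewrite <- mmul_assoc. apply EA_S; auto. }
  destruct b; unfold Sk. apply EA_Sr; auto. rewrite mmul_Id_r; auto.
Qed.

Lemma lam_Za v : inLambda q v -> Za (fst v) /\ Za (snd v).
Proof.
  intro H. destruct (lam_entries _ _ H) as [g [Hg ->]]. destruct (inG_EA g Hg) as [? [? [? ?]]].
  simpl; auto.
Qed.

Lemma lam_unit1 a : inLambda q (a, 0) -> 0 <= a -> a = 1.
Proof.
  intros H Ha. destruct (lam_entries _ _ H) as [g [Hg E]]. injection E; intros E2 E1.
  pose proof (inG_det _ _ Hg). destruct (inG_EA g Hg) as [Z1 [_ [_ Z4]]].
  unfold det in H0. rewrite <- E1, <- E2 in *.
  unfold Za, Z01 in *. nra.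
Qed.

Lemma lam_unit2 b : inLambda q (0, b) -> 0 <= b -> b = 1.
Proof.
  intros H Hb. destruct (lam_entries _ _ H) as [g [Hg E]]. injection E; intros E2 E1.
  pose proof (inG_det _ _ Hg). destruct (inG_EA g Hg) as [_ [Z2 [Z3 _]]].
  unfold det in H0. rewrite <- E1, <- E2 in *.
  unfold Za, Z01 in *. nra.
Qed.

End W.

Definition good q v w := exists M, inG q M /\ v = (m11 M, m21 M) /\ w = (m12 M, m22 M).

Lemma Umat_eq q : Umat q = Mat2 (lam q) (-1) 1 0.
Proof. unfold Umat; mq. Qed.

Lemma inG_Nm q j : inG q (Nm q j).
Proof.
  induction j.
  - rewrite Nm0. apply inG_T.
  - replace (Nm q (S j)) with (mmul (Umat q) (Nm q j)).
    + apply inG_mul; auto. unfold Umat; apply inG_mul; [apply inG_T|apply inG_S].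
    + rewrite Umat_eq. unfold Nm. rewrite !xy_S. unfold mmul; simpl; f_equal; ring.
Qed.

Lemma good_child q v w j : good q v w -> good q (comb q j v w) (comb q (S j) v w).
Proof.
  intros [M [HM [-> ->]]]. exists (mmul M (Nm q j)). split.
  - apply inG_mul; auto. apply inG_Nm.
  - unfold comb, mmul, Nm; simpl. split; f_equal; ring.
Qed.

Lemma good_wedge q v w : good q v w -> wedge v w = 1.
Proof.
  intros [M [HM [-> ->]]]. pose proof (inG_det _ _ HM). unfold det, wedge in *; simpl; lra.
Qed.

Lemma good_lam q v w : good q v w -> inLambda q v /\ inLambda q w.
Proof.
  intros [M [HM [-> ->]]]. split.
  - exists M; split; auto. unfold mvec; simpl; f_equal; ring.
  - exists (mmul M Smat); split. apply inG_mul; auto; apply inG_S.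
    destruct M; unfold mvec, mmul, Smat; simpl; f_equal; ring.
Qed.

Lemma comb_0 q v w : comb q 0 v w = v.
Proof. destruct v, w; unfold comb; rewrite xy_0; simpl; f_equal; ring. Qed.
Lemma comb_last q (Hq : (3 <= q)%nat) v w : comb q (q-1) v w = w.
Proof. destruct v, w; unfold comb; rewrite x_last, y_last by auto; simpl; f_equal; ring. Qed.

Lemma sector_comb u0 u1 v w a b : in_sector u0 u1 v -> in_sector u0 u1 w -> 0 <= a -> 0 <= b ->
  in_sector u0 u1 (a * fst v + b * fst w, a * snd v + b * snd w).
Proof.
  intros [a1 [b1 [H1 [H2 ->]]]] [a2 [b2 [H3 [H4 ->]]]] Ha Hb.
  exists (a * a1 + b * a2), (a * b1 + b * b2). split; [nra|split; [nra|]].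
  simpl; f_equal; ring.
Qed.

Fixpoint chainP (P : vec -> vec -> Prop) (l : list vec) : Prop :=
  match l with
  | a :: ((b :: _) as t) => P a b /\ chainP P t
  | _ => True
  end.

Lemma chain_map P (f : nat -> vec) n : forall a,
  (forall k, (a <= k)%nat -> (S k < a + n)%nat -> P (f k) (f (S k))) -> chainP P (map f (seq a n)).
Proof.
  induction n as [|n IH]; intros a H. simpl; auto.
  destruct n as [|n]. simpl; auto.
  change (map f (seq a (S (S n)))) with (f a :: map f (seq (S a) (S n))).
  change (chainP P (f a :: f (S a) :: map f (seq (S (S a)) n))).
  split. apply H; lia.
  change (chainP P (map f (seq (S a) (S n)))). apply IH. intros; apply H; lia.
Qed.

Lemma chain_join P l w R : chainP P (l ++ [w]) -> chainP P (w :: R) -> chainP P (l ++ w :: R).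
Proof.
  induction l as [|a l IH]; simpl; auto.
  destruct l as [|b l]; simpl in *.
  - tauto.
  - intros [H1 H2] H3. split; auto. apply (IH H2 H3).
Qed.

Definition blk q v w := map (fun j => comb q j v w) (seq 1 (q - 1)).

Lemma full_eq2 q (Hq : (3 <= q)%nat) v w :
  v :: blk q v w = map (fun j => comb q j v w) (seq 0 q).
Proof.
  unfold blk. replace q with (S (q - 1)) at 2 by lia. simpl. rewrite comb_0. reflexivity.
Qed.

Lemma full_eq q (Hq : (3 <= q)%nat) v w :
  v :: blk q v w = map (fun j => comb q j v w) (seq 0 (q - 1)) ++ [w].
Proof.
  rewrite full_eq2 by auto. replace q with (S (q - 1)) at 1 by lia.
  rewrite seq_S, map_app. simpl. rewrite comb_last by auto. reflexivity.
Qed.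

Lemma chain_refine_aux q (Hq : (3 <= q)%nat) (P : vec -> vec -> Prop)
  (HP : forall v w, P v w -> forall j, (j <= q - 2)%nat -> P (comb q j v w) (comb q (S j) v w)) :
  forall r v, chainP P (v :: r) -> chainP P (v :: refine_aux q v r).
Proof.
  induction r as [|w r IH]; intros v H. simpl; auto.
  destruct H as [Hvw Hr].
  change (v :: refine_aux q v (w :: r)) with ((v :: blk q v w) ++ refine_aux q w r).
  rewrite full_eq by auto. rewrite <- app_assoc. simpl.
  apply chain_join.
  - rewrite <- full_eq by auto. rewrite full_eq2 by auto. apply chain_map.
    intros k _ Hk. apply HP; auto; lia.
  - apply IH; auto.
Qed.

Lemma chain_refine q (Hq : (3 <= q)%nat) (P : vec -> vec -> Prop)
  (HP : forall v w, P v w -> forall j, (j <= q - 2)%nat -> P (comb q j v w) (comb q (S j) v w)) :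
  forall l, chainP P l -> chainP P (refine q l).
Proof. intros [|v r] H. simpl; auto. apply chain_refine_aux; auto. Qed.

Lemma refine_len q (Hq : (3 <= q)%nat) l : (2 <= length l)%nat -> (2 <= length (refine q l))%nat.
Proof.
  destruct l as [|v [|w r]]; simpl; intros; try lia.
  unfold blk. rewrite length_app, length_map, length_seq. lia.
Qed.

Lemma chain_nth P l d : chainP P l -> forall i, (S i < length l)%nat -> P (nth i l d) (nth (S i) l d).
Proof.
  induction l as [|a l IH]; intros H i Hi. simpl in Hi; lia.
  destruct l as [|b l]. simpl in Hi; lia.
  destruct H as [H1 H2]. destruct i. simpl; auto.
  change (P (nth i (b :: l) d) (nth (S i) (b :: l) d)). apply IH; auto. simpl in *; lia.
Qed.

Lemma chain_in P l : chainP P l -> (2 <= length l)%nat -> forall v, In v l ->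
  (exists w, P v w) \/ (exists u, P u v).
Proof.
  induction l as [|a l IH]; intros H Hl v Hv. destruct Hv.
  destruct l as [|b l]. simpl in Hl; lia.
  destruct H as [H1 H2]. destruct Hv as [<-|Hv].
  - left; eauto.
  - destruct l as [|c l].
    + destruct Hv as [<-|[]]. right; eauto.
    + apply IH; auto. simpl; lia.
Qed.

Fixpoint lastd (x : vec) (l : list vec) : vec := match l with [] => x | a :: l' => lastd a l' end.

Lemma refine_aux_app q r1 : forall x r2,
  refine_aux q x (r1 ++ r2) = refine_aux q x r1 ++ refine_aux q (lastd x r1) r2.
Proof.
  induction r1 as [|a r1 IH]; intros x r2. reflexivity.
  simpl. rewrite IH, app_assoc. reflexivity.
Qed.

Lemma lastd_snoc x l y : lastd x (l ++ [y]) = y.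
Proof. revert x; induction l; simpl; auto. Qed.

Lemma refine_aux_snoc q (Hq : (3 <= q)%nat) x r y : exists R, refine_aux q x (r ++ [y]) = R ++ [y].
Proof.
  rewrite refine_aux_app. simpl. rewrite app_nil_r.
  unfold blk. replace (q - 1)%nat with (S (q - 2)) by lia. rewrite seq_S, map_app. simpl.
  replace (S (q-2)) with (q - 1)%nat by lia. rewrite comb_last by auto.
  eexists. rewrite app_assoc. reflexivity.
Qed.

Definition infix (m l : list vec) := exists l1 l2, l = l1 ++ m ++ l2.

Lemma infix_refine q (Hq : (3 <= q)%nat) y m l : infix (y :: m) l -> infix (refine q (y :: m)) (refine q l).
Proof.
  intros [l1 [l2 ->]]. destruct l1 as [|x l1].
  - simpl. rewrite refine_aux_app. exists [], (refine_aux q (lastd y m) l2). reflexivity.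
  - simpl.
    replace (l1 ++ y :: m ++ l2) with ((l1 ++ [y]) ++ (m ++ l2)) by (rewrite <- app_assoc; reflexivity).
    rewrite (refine_aux_app q (l1 ++ [y])), lastd_snoc, (refine_aux_app q m).
    destruct (refine_aux_snoc q Hq x l1 y) as [R ->].
    exists (x :: R), (refine_aux q (lastd y m) l2). simpl. rewrite <- !app_assoc. reflexivity.
Qed.

Lemma iter_cons q y m n : exists m', Nat.iter n (refine q) (y :: m) = y :: m'.
Proof.
  induction n as [|n [m' IH]]. exists m; reflexivity.
  simpl. rewrite IH. simpl. eauto.
Qed.

Lemma infix_iter q (Hq : (3 <= q)%nat) n : forall y m l, infix (y :: m) l ->
  infix (Nat.iter n (refine q) (y :: m)) (Nat.iter n (refine q) l).
Proof.
  induction n as [|n IH]; intros y m l H. simpl; auto.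
  simpl. destruct (iter_cons q y m n) as [m' E]. rewrite E. apply infix_refine; auto.
  rewrite <- E. apply IH; auto.
Qed.

Lemma infix_in z m l : infix m l -> In z m -> In z l.
Proof. intros [l1 [l2 ->]] H. apply in_or_app; right; apply in_or_app; left; auto. Qed.

Lemma child_infix q (Hq : (3 <= q)%nat) v w j : (j <= q - 2)%nat ->
  infix [comb q j v w; comb q (S j) v w] (refine q [v; w]).
Proof.
  intro Hj. change (refine q [v;w]) with (v :: (blk q v w ++ [])). rewrite app_nil_r, full_eq2 by auto.
  assert (E : seq 0 q = seq 0 (j + (2 + (q - 2 - j)))) by (f_equal; lia). rewrite E.
  rewrite seq_app, map_app. simpl.
  exists (map (fun j0 => comb q j0 v w) (seq 0 j)),
         (map (fun j0 => comb q j0 v w) (seq (S (S j)) (q - 2 - j))). reflexivity.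
Qed.

Lemma coord_lambda q v w z a b : good q v w -> inLambda q z ->
  z = (a * fst v + b * fst w, a * snd v + b * snd w) -> inLambda q (a, b).
Proof.
  intros [M [HM [-> ->]]] Hz E.
  pose proof (inG_det _ _ HM) as Hd. unfold det in Hd.
  replace (a, b) with (mvec (inv2 M) z).
  - apply lam_transform; auto. apply inG_inv; auto.
  - rewrite E. unfold mvec, inv2; simpl. f_equal.
    + replace (m22 M * (a * m11 M + b * m12 M) + - m12 M * (a * m21 M + b * m22 M))
        with (a * (m11 M * m22 M - m12 M * m21 M)) by ring. rewrite Hd; ring.
    + replace (- m21 M * (a * m11 M + b * m12 M) + m11 M * (a * m21 M + b * m22 M))
        with (b * (m11 M * m22 M - m12 M * m21 M)) by ring. rewrite Hd; ring.
Qed.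

Lemma wedge_xy q j : wedge (xy q j) (xy q (S j)) = 1.
Proof.
  induction j.
  - rewrite xy_S, xy_0. unfold wedge; simpl; ring.
  - rewrite (xy_S q (S j)). rewrite xy_S in *. unfold wedge in *; simpl in *. rewrite <- IHj. ring.
Qed.

Lemma disc_ivt (f : nat -> R) n : 0 <= f 0%nat -> f n <= 0 -> (1 <= n)%nat ->
  exists j, (j < n)%nat /\ 0 <= f j /\ f (S j) <= 0.
Proof.
  induction n as [|n IH]; intros H0 Hn H1. lia.
  destruct (Rle_dec 0 (f n)) as [Hp|Hp].
  - exists n; split; [lia|split; auto].
  - destruct n. lra. destruct IH as [j [Hj [A B]]]; auto; try lra; try lia.
    exists j; split; [lia|auto].
Qed.

Lemma measure q (Hq : (3 <= q)%nat) j a' b' : (j <= q - 2)%nat -> Z01 a' -> Z01 b' ->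
  1 <= a' * fst (xy q j) + b' * fst (xy q (S j)) ->
  1 <= a' * snd (xy q j) + b' * snd (xy q (S j)) ->
  a' + b' <= a' * fst (xy q j) + b' * fst (xy q (S j)) + (a' * snd (xy q j) + b' * snd (xy q (S j))) - 1.
Proof.
  intros Hj Ha Hb H1 H2.
  pose proof (x_ge1 q Hq j Hj) as X0.
  pose proof (y_S q j) as Y1.
  pose proof (y_ge0 q Hq j ltac:(lia)) as Y0.
  pose proof (x_ge0 q Hq (S j) ltac:(lia)) as X1.
  unfold Z01 in *.
  destruct j as [|j].
  - rewrite xy_0 in *; cbn [fst snd] in *.
    pose proof (x_ge1 q Hq 1 ltac:(lia)). destruct Ha, Hb; subst; nra.
  - pose proof (y_ge1 q Hq (S j) ltac:(lia) ltac:(lia)) as Y2.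
    destruct (Nat.eq_dec (S j) (q - 2)) as [E|E].
    + assert (fst (xy q (S (S j))) = 0) by (replace (S (S j)) with (q - 1)%nat by lia; apply x_last; auto).
      rewrite H in *. destruct Ha, Hb; subst; nra.
    + pose proof (x_ge1 q Hq (S (S j)) ltac:(lia)). destruct Ha, Hb; subst; nra.
Qed.

Lemma descent q (Hq : (3 <= q)%nat) N : forall v w z a b, good q v w -> inLambda q z ->
  0 <= a -> 0 <= b -> z = (a * fst v + b * fst w, a * snd v + b * snd w) -> a + b <= INR N ->
  exists n, In z (Nat.iter n (refine q) [v; w]).
Proof.
  induction N as [|N IH]; intros v w z a b Hg Hz Ha Hb Ez HN;
  pose proof (coord_lambda q v w z a b Hg Hz Ez) as Hab;
  destruct (lam_Za q Hq _ Hab) as [Za1 Zb1]; simpl in Za1, Zb1;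
  apply Za_pos in Za1; auto; apply Za_pos in Zb1; auto.
  all: destruct (Req_dec a 0) as [Ea|Ea];
    [ subst a; assert (b = 1) by (apply (lam_unit2 q Hq); auto); subst b;
      exists 0%nat; simpl; right; left; rewrite Ez; destruct w; simpl; f_equal; ring |].
  all: destruct (Req_dec b 0) as [Eb|Eb];
    [ subst b; assert (a = 1) by (apply (lam_unit1 q Hq); auto); subst a;
      exists 0%nat; simpl; left; rewrite Ez; destruct v; simpl; f_equal; ring |].
  all: assert (1 <= a) by (destruct Za1; lra); assert (1 <= b) by (destruct Zb1; lra).
  { simpl in HN; lra. }
  set (f := fun k => wedge (xy q k) (a, b)).
  assert (Hf0 : 0 <= f 0%nat) by (unfold f, wedge; rewrite xy_0; simpl; lra).
  assert (Hf1 : f (q - 1)%nat <= 0) by (unfold f, wedge; rewrite x_last, y_last by auto; simpl; lra).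
  destruct (disc_ivt f (q - 1) Hf0 Hf1 ltac:(lia)) as [j [Hj [F1 F2]]].
  set (a' := - f (S j)). set (b' := f j).
  pose proof (wedge_xy q j) as Wj.
  assert (Ea' : a = a' * fst (xy q j) + b' * fst (xy q (S j))).
  { unfold a', b', f, wedge in *; cbn [fst snd].
    replace a with (a * (fst (xy q j) * snd (xy q (S j)) - fst (xy q (S j)) * snd (xy q j))) at 1
      by (rewrite Wj; ring). ring. }
  assert (Eb' : b = a' * snd (xy q j) + b' * snd (xy q (S j))).
  { unfold a', b', f, wedge in *; cbn [fst snd].
    replace b with (b * (fst (xy q j) * snd (xy q (S j)) - fst (xy q (S j)) * snd (xy q j))) at 1
      by (rewrite Wj; ring). ring. }
  assert (Ez' : z = (a' * fst (comb q j v w) + b' * fst (comb q (S j) v w),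
                     a' * snd (comb q j v w) + b' * snd (comb q (S j) v w))).
  { rewrite Ez, Ea', Eb'. unfold comb; simpl. f_equal; ring. }
  pose proof (good_child q v w j Hg) as Hg'.
  pose proof (coord_lambda q _ _ z a' b' Hg' Hz Ez') as Hab'.
  destruct (lam_Za q Hq _ Hab') as [Za2 Zb2]; simpl in Za2, Zb2.
  assert (0 <= a') by (unfold a'; lra). assert (0 <= b') by (unfold b'; lra).
  apply Za_pos in Za2; auto. apply Za_pos in Zb2; auto.
  pose proof (measure q Hq j a' b' ltac:(lia) Za2 Zb2 ltac:(lra) ltac:(lra)).
  destruct (IH _ _ z a' b' Hg' Hz H1 H2 Ez') as [n Hn].
  { rewrite S_INR in HN. lra. }
  exists (S n). rewrite Nat.iter_succ_r.
  apply infix_in with (Nat.iter n (refine q) [comb q j v w; comb q (S j) v w]); auto.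
  apply infix_iter; auto. apply child_infix; auto. lia.
Qed.

Definition Tz q (k : Z) := Mat2 1 (IZR k * lam q) 0 1.

Lemma inG_Tz_nat q n : inG q (Tz q (Z.of_nat n)) /\ inG q (Tz q (- Z.of_nat n)).
Proof.
  induction n as [|n [IH1 IH2]].
  - simpl. replace (Tz q 0) with Id2 by (unfold Tz, Id2; f_equal; ring). split; constructor.
  - rewrite Nat2Z.inj_succ. split.
    + replace (Tz q (Z.succ (Z.of_nat n))) with (mmul (Tmat q) (Tz q (Z.of_nat n))).
      constructor; auto. unfold Tz, Tmat, mmul; simpl. rewrite succ_IZR. f_equal; ring.
    + replace (Tz q (- Z.succ (Z.of_nat n))) with (mmul (Tinv q) (Tz q (- Z.of_nat n))).
      constructor; auto. unfold Tz, Tinv, mmul; simpl. rewrite Z.opp_succ, <- Z.sub_1_r, minus_IZR, !opp_IZR.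
      f_equal; ring.
Qed.

Lemma inG_Tz q k : inG q (Tz q k).
Proof.
  destruct (Z_le_gt_dec 0 k).
  - rewrite <- (Z2Nat.id k) by lia. apply inG_Tz_nat.
  - replace k with (- Z.of_nat (Z.to_nat (- k)))%Z by lia. apply inG_Tz_nat.
Qed.

Lemma init_good q (Hq : (3 <= q)%nat) u0 u1 : inLambda q u0 -> inLambda q u1 -> wedge u0 u1 = 1 ->
  good q u0 u1.
Proof.
  intros H0 H1 Hw.
  destruct (lam_entries q u0 H0) as [g0 [Hg0 E0]].
  pose proof (inG_det _ _ Hg0) as Hd.
  pose proof (lam_pos q Hq) as Lp. pose proof (lam_lt2 q Hq) as L2.
  set (l := lam q) in *.
  destruct u1 as [s t].
  set (a := m22 g0 * s - m12 g0 * t).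
  set (k := Int_part (a / l)).
  destruct (base_Int_part (a / l)) as [K1 K2]. fold k in K1, K2.
  assert (R1 : IZR k * l <= a).
  { apply Rmult_le_compat_r with (r := l) in K1; [|lra].
    replace (a / l * l) with a in K1 by (field; lra). exact K1. }
  assert (R2 : a < IZR k * l + l).
  { assert (a / l < IZR k + 1) by lra.
    apply Rmult_lt_compat_r with (r := l) in H; [|lra].
    replace (a / l * l) with a in H by (field; lra). lra. }
  set (r := a - IZR k * l).
  set (g' := mmul g0 (Tz q k)).
  assert (Hg' : inG q g') by (apply inG_mul; auto; apply inG_Tz).
  destruct g0 as [p11 p12 p21 p22]. unfold det in Hd; simpl in *.
  subst u0. unfold wedge in Hw; simpl in Hw.
  assert (Ec : mvec (inv2 g') (s, t) = (r, 1)).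
  { unfold g', inv2, mvec, mmul, Tz; simpl. unfold r, a. fold l. f_equal.
    - transitivity (p22*s - p12*t - IZR k * l * (p11*t - s*p21)); [ring| rewrite Hw; ring].
    - transitivity (p11*t - s*p21); [ring|exact Hw]. }
  assert (Hc : inLambda q (r, 1)).
  { rewrite <- Ec. apply lam_transform; auto. apply inG_inv; auto. }
  assert (Hc2 : inLambda q (r - l, 1)).
  { replace (r - l, 1) with (mvec (Tinv q) (r, 1)).
    apply lam_transform; auto. apply inG_Ti.
    unfold mvec, Tinv; simpl. fold l. f_equal; ring. }
  destruct (lam_Za q Hq _ Hc) as [Zr _]. destruct (lam_Za q Hq _ Hc2) as [Zr2 _].
  simpl in Zr, Zr2.
  assert (Hr : r = 0).
  { unfold Za, Z01 in Zr, Zr2. unfold r in *. lra. }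
  exists g'. split; auto.
  unfold g', mmul, Tz; simpl. fold l. unfold r, a in Hr.
  split. f_equal; ring.
  assert (E : p22*s - p12*t = IZR k * l) by lra.
  f_equal.
  - transitivity (s * (p11*p22 - p12*p21)); [rewrite Hd; ring|].
    transitivity (p11 * (p22*s - p12*t) + p12 * (p11*t - s*p21)); [ring|]. rewrite E, Hw; ring.
  - transitivity (t * (p11*p22 - p12*p21)); [rewrite Hd; ring|].
    transitivity (p21 * (p22*s - p12*t) + p22 * (p11*t - s*p21)); [ring|]. rewrite E, Hw; ring.
Qed.

Theorem mainTheorem2 (q : nat) (Hq : (3 <= q)%nat) (u0 u1 : vec)
  (H0 : inLambda q u0) (H1 : inLambda q u1) (Hw : wedge u0 u1 = 1) :
  (forall (n : nat) (v : vec), In v (Ln q u0 u1 n) ->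
      inLambda q v /\ in_sector u0 u1 v) /\
  (forall (n i : nat), (S i < length (Ln q u0 u1 n))%nat ->
      wedge (nth i (Ln q u0 u1 n) (0, 0)) (nth (S i) (Ln q u0 u1 n) (0, 0)) = 1) /\
  (forall v : vec, inLambda q v -> in_sector u0 u1 v ->
      exists n : nat, In v (Ln q u0 u1 n)).
Proof.
  pose proof (init_good q Hq u0 u1 H0 H1 Hw) as Hg.
  set (P := fun v w => good q v w /\ in_sector u0 u1 v /\ in_sector u0 u1 w).
  assert (HP : forall v w, P v w -> forall j, (j <= q - 2)%nat -> P (comb q j v w) (comb q (S j) v w)).
  { intros v w [Hvw [Sv Sw]] j Hj. split; [apply good_child; auto|].
    split; apply sector_comb; auto.
    apply x_ge0; auto; lia. apply y_ge0; auto; lia.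
    apply x_ge0; auto; lia. apply y_ge0; auto; lia. }
  assert (Inv : forall n, chainP P (Ln q u0 u1 n) /\ (2 <= length (Ln q u0 u1 n))%nat).
  { induction n as [|n [IH1 IH2]].
    - simpl. split; auto. split; auto. split; auto. split.
      + exists 1, 0. split; [lra|split; [lra|]]. destruct u0, u1; simpl; f_equal; ring.
      + exists 0, 1. split; [lra|split; [lra|]]. destruct u0, u1; simpl; f_equal; ring.
    - change (Ln q u0 u1 (S n)) with (refine q (Ln q u0 u1 n)). split.
      + apply chain_refine; auto.
      + apply refine_len; auto. }
  split; [|split].
  - intros n v Hv. destruct (Inv n) as [C L].
    destruct (chain_in P _ C L v Hv) as [[w [Hvw [Sv Sw]]]|[u [Huv [Su Sv]]]].
    + split; auto. apply (good_lam q v w Hvw).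
    + split; auto. apply (good_lam q u v Huv).
  - intros n i Hi. destruct (Inv n) as [C L].
    destruct (chain_nth P _ (0,0) C i Hi) as [G _]. apply (good_wedge q _ _ G).
  - intros v Hv [a [b [Ha [Hb Ev]]]].
    destruct (archimed (a + b)) as [A1 _].
    set (N := Z.to_nat (up (a + b))).
    assert (a + b <= INR N).
    { unfold N. rewrite INR_IZR_INZ, Z2Nat.id. lra.
      apply le_IZR. simpl. lra. }
    destruct (descent q Hq N u0 u1 v a b Hg Hv Ha Hb Ev H) as [n Hn].
    exists n. exact Hn.
Qed.
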